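(* (a) For every word $r\in\{0,1\}^*$, $V([r0]_F)\geq V([r]_F)$. (b) For all integers $k\geq 0$ and all words $r'\in\{0,1\}^*$, $V([r'10^{2k+1}]_F)=V([r'10^{2k}]_F)$.
   Context: Fibonacci numbers: $F_0=0$, $F_1=1$, $F_{m+2}=F_{m+1}+F_m$. For a word $k_m\cdots k_0$ of nonnegative integer digits (in particular a word over $\{0,1\}$), $[k_m\cdots k_0]_F=\sum_{i=0}^m k_iF_{i+2}$; $0^j$ denotes $j$ copies of the digit $0$ and juxtaposition is concatenation. Standard Fibonacci words: $f_{-1}=b$, $f_0=a$, $f_{m+1}=f_mf_{m-1}$. The Fibonacci word ${\bf f}=\lim f_m$, with prefix of length $j$ denoted ${\bf f}(0..j]$. $V(N)$ is the number of factorizations of ${\bf f}(0..N]$ as $f_m^{k_m}f_{m-1}^{k_{m-1}}\cdots f_0^{k_0}$ with all $k_i\geq 0$ (i.e. into standard words $f_i$, $i\ge 0$, in non-strictly decreasing order of index), counted up to leading zero exponents; $V(0)=1$. *)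

(* Defs.v *)
From mathcomp Require Import all_boot.
Set Implicit Arguments. Unset Strict Implicit. Unset Printing Implicit Defensive.

Fixpoint F (n : nat) : nat :=
  match n with
  | 0 => 0
  | 1 => 1
  | (m.+1 as p).+1 => F p + F m
  end.

(* [k_m ... k_0]_F = sum_i k_i F_{i+2}; the word is listed in written order
   (most significant digit first), digits are booleans (0/1). *)
Definition valF (w : seq bool) : nat :=
  \sum_(i < size w) (nth false (rev w) i : nat) * F i.+2.

Definition la : nat := 0.
Definition lb : nat := 1.

(* fw_aux n = f_{n-1}: fw_aux 0 = f_{-1} = b, fw_aux 1 = f_0 = a,
   f_{m+1} = f_m f_{m-1}. *)
Fixpoint fw_aux (n : nat) : seq nat :=
  match n with
  | 0 => [:: lb]
  | 1 => [:: la]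
  | (m.+1 as p).+1 => fw_aux p ++ fw_aux m
  end.

Definition fw (m : nat) : seq nat := fw_aux m.+1.

(* prefix of length N of the infinite Fibonacci word (f_N has length
   F_{N+2} > N and each f_m (m >= 0) is a prefix of f_{m+1}) *)
Definition fprefix (N : nat) : seq nat := take N (fw N).

Definition factor_word (N : nat) (k : {ffun 'I_N.+1 -> 'I_N.+1}) : seq nat :=
  flatten [seq flatten (nseq (k i) (fw i)) | i <- rev (enum 'I_N.+1)].

(* V(N): number of factorizations of fprefix N as f_m^{k_m}...f_0^{k_0},
   up to leading zero exponents.  Any such factorization has k_i = 0 for
   i >= N (since |f_i| = F_{i+2} > N) and k_i <= N, so they are exactly
   the exponent vectors (k_0,...,k_N) with entries in [0, N]. *)
Definition V (N : nat) : nat :=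
  #|[set k : {ffun 'I_N.+1 -> 'I_N.+1} | factor_word k == fprefix N]|.

Example fpre : fprefix 5 = [:: 0;1;0;0;1]. Proof. by vm_compute. Qed.

(* Main.v *)
Require Import Defs.
From mathcomp Require Import all_boot zify.
Set Implicit Arguments. Unset Strict Implicit. Unset Printing Implicit Defensive.

Definition phi1 (x : nat) : seq nat := if x == 0 then [:: 0; 1] else [:: 0].
Definition phi (u : seq nat) : seq nat := flatten (map phi1 u).

Lemma phi_cat u v : phi (u ++ v) = phi u ++ phi v.
Proof. by rewrite /phi map_cat flatten_cat. Qed.

Lemma FSS n : F n.+2 = F n.+1 + F n.
Proof. by []. Qed.

Lemma gSS n : fw_aux n.+2 = fw_aux n.+1 ++ fw_aux n.
Proof. by []. Qed.

Lemma g_phi n : phi (fw_aux n) = fw_aux n.+1.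
Proof.
suff: phi (fw_aux n) = fw_aux n.+1 /\ phi (fw_aux n.+1) = fw_aux n.+2 by case.
elim: n => [|n [IH1 IH2]]; first by split.
split => //. by rewrite gSS phi_cat IH1 IH2.
Qed.

Lemma size_g n : size (fw_aux n) = F n.+1.
Proof.
suff: size (fw_aux n) = F n.+1 /\ size (fw_aux n.+1) = F n.+2 by case.
elim: n => [|n [IH1 IH2]]; first by split.
split => //. by rewrite gSS size_cat IH1 IH2 [F n.+3]FSS addnC.
Qed.

Lemma F_ge n : n <= F n.+1.
Proof.
suff: n <= F n.+1 /\ n.+1 <= F n.+2 by case.
elim: n => [|n [IH1 IH2]]; first by split.
split => //. rewrite FSS. have : 1 <= F n.+1.
  case: n IH1 IH2 => // n; lia.
lia.
Qed.

Lemma F_mono m n : m <= n -> F m <= F n.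
Proof.
move=> /subnKC <-; elim: (n - m) => [|d IH]; first by rewrite addn0.
rewrite addnS; apply: leq_trans IH _.
case: (m + d) => // p; rewrite FSS; lia.
Qed.

Lemma g_pre m d : 1 <= m -> take (size (fw_aux m)) (fw_aux (m + d)) = fw_aux m.
Proof.
move=> Hm; elim: d => [|d IH]; first by rewrite addn0 take_size.
rewrite addnS; case E: (m + d) => [|p]; first lia.
rewrite gSS takel_cat; first by rewrite -E.
by rewrite -E !size_g; apply: F_mono; lia.
Qed.

Lemma size_fw m : size (fw m) = F m.+2.
Proof. by rewrite /fw size_g. Qed.

Lemma size_fw_gt m : m < size (fw m).
Proof. rewrite size_fw; exact: F_ge. Qed.

Lemma fw_phi m : phi (fw m) = fw m.+1.
Proof. by rewrite /fw g_phi. Qed.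

Lemma fw_le m m' : m <= m' -> take (size (fw m)) (fw m') = fw m.
Proof.
move=> H; rewrite /fw -(subnKC H) -addSn; exact: g_pre.
Qed.

Lemma takeK n m m' : n <= size (fw m) -> n <= size (fw m') ->
  take n (fw m) = take n (fw m').
Proof.
wlog H : m m' / m <= m'.
  move=> W H1 H2; case: (leqP m m') => Hm; first exact: W.
  symmetry; apply: W => //; exact: ltnW.
move=> H1 _; by rewrite -(fw_le H) take_takel.
Qed.

Lemma fprefixE N M : N <= size (fw M) -> fprefix N = take N (fw M).
Proof. move=> H; rewrite /fprefix; apply: takeK => //; exact: ltnW (size_fw_gt N). Qed.

Lemma near_comm n : exists v x y,
  fw_aux n.+2 ++ fw_aux n.+1 = v ++ [:: x; y] /\
  fw_aux n.+1 ++ fw_aux n.+2 = v ++ [:: y; x].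
Proof.
elim: n => [|n [v [x [y [H1 H2]]]]]; first by exists [:: 0], 1, 0.
exists (fw_aux n.+2 ++ v), y, x; split.
  by rewrite gSS -catA H2 catA.
by rewrite [fw_aux n.+3]gSS catA -catA H1 catA.
Qed.

Definition b01 (u : seq nat) := all (fun x => x <= 1) u.

Lemma b01_cat u v : b01 (u ++ v) = b01 u && b01 v.
Proof. by rewrite /b01 all_cat. Qed.

Lemma b01_g n : b01 (fw_aux n).
Proof.
suff: b01 (fw_aux n) /\ b01 (fw_aux n.+1) by case.
elim: n => [|n [IH1 IH2]]; first by split.
by split => //; rewrite gSS b01_cat IH1 IH2.
Qed.

Lemma phi_inj u v : b01 u -> b01 v -> phi u = phi v -> u = v.
Proof.
elim: u v => [|x u IH] [|y v] //=.
- by case: y => [|[]].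
- by case: x => [|[]].
move=> /andP [Hx Hu] /andP [Hy Hv].
rewrite /phi /= -/(phi u) -/(phi v) /phi1.
have Hh : forall w, b01 w -> phi w = [::] \/ exists w', phi w = 0 :: w'.
  case => [|z w] _; [by left | right].
  by rewrite /phi /= /phi1; case: (z == 0); eexists.
case: x Hx => [|[|//]] _; case: y Hy => [|[|//]] _ /=.
- by case=> /IH ->.
- case=> E; have [E1|[w' E1]] := Hh _ Hv; by rewrite E1 in E.
- case=> E; have [E1|[w' E1]] := Hh _ Hu; by rewrite E1 in E.
- by case=> /IH ->.
Qed.

Lemma size_phi u : size u <= size (phi u) <= (size u).*2.
Proof.
elim: u => [|x u IH] //=; rewrite /phi /= size_cat -/(phi u) /phi1.
by case: (x == 0) => /=; lia.
Qed.

Definition blk (g : nat -> nat) i := flatten (nseq (g i) (fw i)).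
Fixpoint fwr (g : nat -> nat) n :=
  match n with 0 => [::] | n'.+1 => blk g n' ++ fwr g n' end.
Lemma fwrS g n : fwr g n.+1 = blk g n ++ fwr g n.
Proof. by []. Qed.
Definition sh (g : nat -> nat) i := match i with 0 => 0 | j.+1 => g j end.

Lemma fwr_flat g n : fwr g n = flatten [seq blk g j | j <- rev (iota 0 n)].
Proof.
elim: n => [|n IH] //.
by rewrite -addn1 iotaD rev_cat /= -IH addn1.
Qed.

Lemma phi_flat_nseq c u : phi (flatten (nseq c u)) = flatten (nseq c (phi u)).
Proof. by elim: c => [|c IH] //=; rewrite phi_cat IH. Qed.

Lemma phi_fwr g n : phi (fwr g n) = fwr (sh g) n.+1.
Proof.
elim: n => [|n IH] //.
by rewrite [fwr g n.+1]/= phi_cat IH [fwr (sh g) n.+2]/= /blk phi_flat_nseq fw_phi.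
Qed.

Lemma fwr_ext g n d : (forall i, n <= i -> g i = 0) -> fwr g (n + d) = fwr g n.
Proof.
move=> H; elim: d => [|d IH]; first by rewrite addn0.
by rewrite addnS /= IH /blk H ?leq_addr.
Qed.

Lemma fwr_eq g h n : (forall i, i < n -> g i = h i) -> fwr g n = fwr h n.
Proof.
elim: n => [|n IH] H //=.
by rewrite /blk H // IH // => i Hi; apply: H; exact: ltnW.
Qed.

Lemma size_fwr_ge g n i : i < n -> g i * F i.+2 <= size (fwr g n).
Proof.
elim: n => [|n IH] // Hi /=; rewrite size_cat.
case: (ltnP i n) => Hin.
  by apply: leq_trans (IH Hin) _; rewrite leq_addl.
have -> : i = n by lia.
apply: leq_trans (leq_addr _ _).
rewrite /blk; elim: (g n) => [|c IHc] //=.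
by rewrite size_cat size_fw mulSn leq_add2l.
Qed.

Lemma b01_fwr g n : b01 (fwr g n).
Proof.
elim: n => [|n IH] //=; rewrite b01_cat IH andbT /blk.
elim: (g n) => [|c IHc] //=; by rewrite b01_cat IHc /fw b01_g.
Qed.

Lemma fwr_tail g n : exists u, fwr g n.+1 = u ++ nseq (g 0) 0.
Proof.
elim: n => [|n [u IH]].
  exists [::]; rewrite /= cats0 /blk; elim: (g 0) => [|c IH] //=.
  by rewrite IH.
by exists (blk g n.+1 ++ u); rewrite fwrS IH catA.
Qed.

Definition kn n (k : {ffun 'I_n.+1 -> 'I_n.+1}) (i : nat) : nat :=
  if i < n.+1 then nat_of_ord (k (inord i)) else 0.

Lemma factor_word_fwr n (k : {ffun 'I_n.+1 -> 'I_n.+1}) :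
  factor_word k = fwr (kn k) n.+1.
Proof.
rewrite fwr_flat /factor_word -val_enum_ord -map_rev -map_comp.
congr flatten; apply: eq_map => i /=.
by rewrite /blk /kn ltn_ord inord_val.
Qed.

Fixpoint vr (j : nat) (u : seq bool) : nat :=
  match u with [::] => 0 | x :: u' => x * F (size u' + j).+2 + vr j u' end.

Lemma valF_vr u : valF u = vr 0 u.
Proof.
elim: u => [|x u IH]; first by rewrite /valF big_ord0.
rewrite /valF /= big_ord_recr /= -/(valF u) -IH addnC addn0; congr (_ + _).
  by rewrite rev_cons nth_rcons size_rev ltnn eqxx.
rewrite /valF; apply: eq_bigr => i _.
by rewrite rev_cons nth_rcons size_rev ltn_ord.
Qed.

Lemma vr_cat j u v : vr j (u ++ v) = vr (j + size v) u + vr j v.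
Proof.
elim: u => [|x u IH] //=; by rewrite IH size_cat addnA -(addnA (size u)) (addnC (size v) j).
Qed.

Lemma vr_nseq0 j n : vr j (nseq n false) = 0.
Proof. by elim: n. Qed.

Fixpoint w (r : seq bool) : seq nat :=
  match r with [::] => [::] | x :: u => (if x then fw (size u) else [::]) ++ w u end.

Lemma wS x u : w (x :: u) = (if x then fw (size u) else [::]) ++ w u.
Proof. by []. Qed.
Lemma vrS j x u : vr j (x :: u) = x * F (size u + j).+2 + vr j u.
Proof. by []. Qed.

Lemma size_w r : size (w r) = vr 0 r.
Proof.
elim: r => [|x u IH] //; rewrite wS vrS size_cat IH addn0.
by case: x; rewrite ?size_fw ?mul1n ?mul0n.
Qed.

Lemma phi_w r : phi (w r) = w (rcons r false).
Proof.
elim: r => [|x u IH] //; rewrite rcons_cons !wS phi_cat IH size_rcons.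
by case: x => //; rewrite fw_phi.
Qed.

Lemma take_cat_size (a b : seq nat) L : take (size a + L) (a ++ b) = a ++ take L b.
Proof. by rewrite take_cat ltnNge leq_addr /= addKn. Qed.

Lemma legal r : w r = take (size (w r)) (fw (size r).+1) /\
                (size (w r)).+2 <= size (fw (size r).+1).
Proof.
elim: r => [|x u [IH1 IH2]]; first by rewrite take0.
rewrite [size (x :: u)]/=.
have Hmono : size (fw (size u).+1) <= size (fw (size u).+2) by rewrite !size_fw F_mono.
case: x; rewrite wS; last first.
  rewrite cat0s; split; last exact: leq_trans IH2 Hmono.
  rewrite {1}IH1; apply: takeK; lia.
split; last first.
  rewrite size_cat !size_fw; rewrite size_fw in IH2; have := FSS (size u).+2; lia.
case E: (size u) IH1 IH2 Hmono => [|m'] IH1 IH2 Hmono.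
  have E0 : u = [::] by case: u E {IH1 IH2}.
  rewrite E0.
  by [].
have [v [x [y [H1 H2]]]] := near_comm m'.
rewrite /fw in IH1 IH2 *.
rewrite [fw_aux m'.+3]gSS H1 in IH1 IH2.
have HL : size (w u) <= size v by move: IH2; rewrite size_cat /=; lia.
rewrite IH1 takel_cat // [fw_aux m'.+4]gSS [fw_aux m'.+3]gSS -catA H2.
by rewrite size_cat size_takel // take_cat_size takel_cat.
Qed.

Definition psi N := size (phi (fprefix N)).

Lemma size_fprefix N : size (fprefix N) = N.
Proof. rewrite /fprefix size_takel //; exact: ltnW (size_fw_gt N). Qed.

Lemma fprefix_w r : fprefix (vr 0 r) = w r.
Proof.
have [H1 H2] := legal r; rewrite -size_w (fprefixE (M := (size r).+1)) -?H1 //.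
lia.
Qed.

Lemma psi_val r : psi (valF r) = valF (rcons r false).
Proof. by rewrite /psi !valF_vr fprefix_w phi_w size_w. Qed.

Lemma phi_take N : phi (take N (fw N)) ++ phi (drop N (fw N)) = fw N.+1.
Proof. by rewrite -phi_cat cat_take_drop fw_phi. Qed.

Lemma psi_lt N : psi N <= size (fw N.+1).
Proof. by rewrite /psi /fprefix -phi_take size_cat leq_addr. Qed.

Lemma phi_fprefix N : phi (fprefix N) = fprefix (psi N).
Proof.
have E : phi (fprefix N) = take (psi N) (fw N.+1).
  by rewrite /psi /fprefix -phi_take take_size_cat.
by rewrite {1}E (fprefixE (M:=N.+1)) // psi_lt.
Qed.

Lemma nth_psi n : psi n < size (fw n.+1) /\ nth 0 (fw n.+1) (psi n) = 0.
Proof.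
have Hsz : n < size (fw n) := size_fw_gt n.
case Hd: (drop n (fw n)) => [|x s].
  by move: (size_drop n (fw n)); rewrite Hd /=; lia.
rewrite /psi /fprefix -phi_take Hd (phi_cat [:: x]).
set a := phi (take n (fw n)).
rewrite !size_cat nth_cat ltnn subnn /phi /= /phi1.
by case: (x == 0) => /=; split => //; lia.
Qed.

Lemma g_head n : exists s, fw_aux n.+1 = 0 :: s.
Proof.
elim: n => [|n [s IH]]; first by exists [::].
by rewrite gSS IH; eexists.
Qed.

Lemma psi_bounds N : 0 < N -> N < psi N <= N.*2.
Proof.
move=> HN; have := size_phi (fprefix N); rewrite /psi size_fprefix => /andP [_ ->].
rewrite andbT.
have [s Hs] := g_head N.
have E : fprefix N = 0 :: take N.-1 s by rewrite /fprefix /fw Hs; case: N HN {Hs}.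
have Hsz := size_fprefix N; rewrite E in Hsz *.
rewrite (phi_cat [:: 0]) size_cat; have := size_phi (take N.-1 s).
move: Hsz => /= Hsz; lia.
Qed.

Lemma kn_le n (k : {ffun 'I_n.+1 -> 'I_n.+1}) i : kn k i <= n.
Proof. rewrite /kn; case: ifP => // _; rewrite -ltnS; exact: ltn_ord. Qed.

Lemma kn_out n (k : {ffun 'I_n.+1 -> 'I_n.+1}) i : n.+1 <= i -> kn k i = 0.
Proof. by move=> H; rewrite /kn ltnNge H. Qed.

Definition Sh N N' (k : {ffun 'I_N.+1 -> 'I_N.+1}) : {ffun 'I_N'.+1 -> 'I_N'.+1} :=
  [ffun j : 'I_N'.+1 => inord (sh (kn k) j)].

Lemma kn_Sh N N' (k : {ffun 'I_N.+1 -> 'I_N.+1}) i : N <= N' ->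
  kn (Sh N' k) i = if i < N'.+1 then sh (kn k) i else 0.
Proof.
move=> H; rewrite /Sh {1}/kn; case: ifP => Hi //.
rewrite ffunE inordK // inordK //.
case: i Hi => [|i] _ //=; rewrite ltnS; apply: leq_trans H; exact: kn_le.
Qed.

Lemma fw_Sh N N' (k : {ffun 'I_N.+1 -> 'I_N.+1}) : N < N' ->
  factor_word (Sh N' k) = phi (factor_word k).
Proof.
move=> H; rewrite !factor_word_fwr phi_fwr.
rewrite (@fwr_eq _ (sh (kn k))); last by move=> i Hi; rewrite kn_Sh ?Hi // ltnW.
rewrite -(subnKC (H : N.+2 <= N'.+1)) fwr_ext //.
by case=> [|i] // Hi; rewrite /= kn_out.
Qed.

Lemma Sh_inj N N' : N < N' -> injective (@Sh N N').
Proof.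
move=> H k1 k2 E; apply/ffunP => i.
have Hi : i.+1 < N'.+1 by rewrite ltnS; apply: leq_trans H; exact: ltn_ord.
have := congr1 (fun k : {ffun 'I_N'.+1 -> 'I_N'.+1} => nat_of_ord (k (inord i.+1))) E.
rewrite /Sh !ffunE !inordK //= ?ltnS; try (apply: leq_trans (ltnW H); exact: kn_le).
rewrite /kn ltn_ord !inord_val => E'; exact: val_inj.
Qed.

Lemma G1 N : 0 < N -> V N <= V (psi N).
Proof.
move=> HN; have [H1 H2] := andP (psi_bounds HN).
rewrite /V -(card_imset _ (Sh_inj H1)); apply: subset_leq_card.
apply/subsetP => k' /imsetP [k]; rewrite !inE => /eqP Hk ->.
by rewrite fw_Sh // Hk phi_fprefix.
Qed.

Lemma F_big n : n.*2 < F n.+4.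
Proof. rewrite [F n.+4]FSS [F n.+3]FSS; have := F_ge n; have := F_ge n.+1; lia. Qed.

Lemma F_two i : 1 <= i -> 2 <= F i.+2.
Proof. move=> H; apply: (@leq_trans (F 3)) => //; apply: F_mono; lia. Qed.

Lemma b01_fprefix N : b01 (fprefix N).
Proof.
have := b01_g N.+1; rewrite -/(fw N) -(cat_take_drop N (fw N)) b01_cat.
by case/andP.
Qed.

Lemma nseqS_rcons c : nseq c.+1 0 = rcons (nseq c 0) 0.
Proof. by elim: c => [|c IH] //=; rewrite -IH. Qed.

Definition Tb N N' (k' : {ffun 'I_N'.+1 -> 'I_N'.+1}) : {ffun 'I_N.+1 -> 'I_N.+1} :=
  [ffun i : 'I_N.+1 => inord (kn k' i.+1)].

Lemma STk N p (k' : {ffun 'I_(psi N).+1 -> 'I_(psi N).+1}) :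
  0 < N -> fprefix N = rcons p 0 -> factor_word k' = fprefix (psi N) ->
  Sh (psi N) (Tb N k') = k'.
Proof.
move=> HN Hp Hk; have [H1 H2] := andP (psi_bounds HN).
set N' := psi N in H1 H2 k' Hk *.
have Hsz : size (fwr (kn k') N'.+1) = N' by rewrite -factor_word_fwr Hk size_fprefix.
have Hb : forall i, i < N'.+1 -> kn k' i * F i.+2 <= N'.
  by move=> i Hi; rewrite -{2}Hsz; apply: size_fwr_ge.
have K0 : kn k' 0 = 0.
  have [u Hu] := fwr_tail (kn k') N'.
  move: Hk; rewrite factor_word_fwr Hu /N' -phi_fprefix Hp -cats1 phi_cat.
  case: (kn k' 0) => [|c] // .
  rewrite nseqS_rcons -rcons_cat /phi /= /phi1 /= -/(phi p).
  by rewrite -[[:: 0; 1]]/([:: 0] ++ [:: 1]) catA cats1 => /rcons_inj [].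
have K1 : forall i, kn k' i <= N.
  case=> [|i]; first by rewrite K0.
  case: (ltnP i.+1 N'.+1) => Hi; last by rewrite kn_out.
  have := Hb _ Hi; have := F_two (ltn0Sn i).
  move=> HF HH; have : kn k' i.+1 * 2 <= kn k' i.+1 * F i.+3 by rewrite leq_mul2l HF orbT.
  lia.
have K2 : forall i, N.+2 <= i -> kn k' i = 0.
  move=> i Hi; case: (ltnP i N'.+1) => Hi'; last by rewrite kn_out.
  have := Hb _ Hi'; have := F_big N; have : F N.+4 <= F i.+2 by apply: F_mono.
  case: (kn k' i) => [|c] // A B C.
  have : F i.+2 <= c.+1 * F i.+2 by rewrite leq_pmull.
  lia.
have Hsh : forall m, sh (kn (Tb N k')) m = kn k' m.
  case=> [|i] /=; first by rewrite K0.
  rewrite {1}/kn; case: ifP => Hi.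
    by rewrite /Tb ffunE inordK // inordK // ltnS.
  by rewrite K2 //; move/negbT: Hi; rewrite -leqNgt.
apply/ffunP => j; rewrite /Sh ffunE Hsh; apply: val_inj.
rewrite /= inordK; last by rewrite ltnS kn_le.
by rewrite /kn ltn_ord inord_val.
Qed.

Lemma G2 N p : 0 < N -> fprefix N = rcons p 0 -> V (psi N) <= V N.
Proof.
move=> HN Hp; have [H1 H2] := andP (psi_bounds HN).
rewrite /V -(card_in_imset (f := @Tb N (psi N))); last first.
  move=> k1 k2; rewrite !inE => /eqP E1 /eqP E2 E.
  by rewrite -(STk HN Hp E1) -(STk HN Hp E2) E.
apply: subset_leq_card; apply/subsetP => k /imsetP [k']; rewrite !inE => /eqP Hk ->.
apply/eqP; apply: phi_inj; rewrite ?b01_fprefix //.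
  by rewrite factor_word_fwr b01_fwr.
by rewrite -(@fw_Sh N (psi N)) // (STk HN Hp Hk) Hk phi_fprefix.
Qed.

Fixpoint alt k := match k with 0 => [::] | k'.+1 => true :: false :: alt k' end.

Lemma alt_prop k : size (alt k) = k.*2 /\ (vr 0 (alt k)).+1 = F (k.*2).+2.
Proof.
elim: k => [|k [IH1 IH2]]; first by [].
have E : alt k.+1 = true :: false :: alt k by [].
rewrite E [size (true :: _)]/= IH1; split => //.
rewrite vrS vrS mul1n mul0n add0n [size (false :: _)]/= IH1 addn0 -addnS IH2.
by rewrite doubleS [F (k.*2).+4]FSS.
Qed.

Lemma alt_rcons k : exists s, false :: alt k = rcons s false.
Proof.
elim: k => [|k [s IH]]; first by exists [::].
by exists [:: false, true & s]; rewrite /= IH.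
Qed.

Lemma nseq_rc (T : Type) (x : T) c : nseq c.+1 x = rcons (nseq c x) x.
Proof. by elim: c => [|c IH] //=; rewrite -IH. Qed.

Lemma psi0 : psi 0 = 0.
Proof. by []. Qed.

Theorem proposition2 :
  (forall r : seq bool, V (valF r) <= V (valF (rcons r false)))
  /\
  (forall (k : nat) (r' : seq bool),
      V (valF (r' ++ true :: nseq (2 * k).+1 false))
      = V (valF (r' ++ true :: nseq (2 * k) false))).
Proof.
split.
  move=> r; rewrite -psi_val; case: (posnP (valF r)) => H; first by rewrite H.
  exact: G1.
move=> k r'.
set t := r' ++ true :: nseq (2 * k) false.
have -> : r' ++ true :: nseq (2 * k).+1 false = rcons t false.
  by rewrite /t rcons_cat rcons_cons nseq_rc.
have [s Hs] := alt_rcons k.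
have [Ha1 Ha2] := alt_prop k.
set n := valF (r' ++ s).
have Ht : valF t = (psi n).+1.
  rewrite /n psi_val rcons_cat -Hs /t !valF_vr !vr_cat !vrS mul1n mul0n add0n vr_nseq0.
  have -> : size (true :: nseq (2 * k) false) = size (false :: alt k).
    by rewrite /= size_nseq Ha1 mul2n.
  by rewrite ?size_nseq ?mul2n !add0n !addn0 -Ha2 addnS.

have HN : 0 < valF t by rewrite Ht.
have [Hn1 Hn2] := nth_psi n.
have Hp : fprefix (valF t) = rcons (take (psi n) (fw n.+1)) 0.
  by rewrite Ht (fprefixE (M := n.+1)) // (take_nth 0 Hn1) Hn2.
rewrite -psi_val; apply/eqP; rewrite eqn_leq G1 // andbT.
exact: G2 Hp.
Qed.
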